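(* Let $G$ be a residually finite group acting (on the right) primitively on an infinite set $X$, $(x,g)\mapsto x\cdot g$. Let $M=\{1\}\cup G\cup X\cup\{0\}$ be the monoid with identity $1$ and zero $0$, with multiplication extending that of $G$ and given by $xg=x\cdot g$, $gx=0$, $xy=0$ for $g\in G$, $x,y\in X$. Then $I=X\cup\{0\}$ is an ideal of $M$ which is residually finite (as a semigroup), the Rees quotient $M/I$ is residually finite, but $M$ is not residually finite.
   Context: For an ideal $I$ of a monoid $M$, the Rees quotient $M/I$ is the quotient by the congruence $\Delta_M\cup(I\times I)$, where $\Delta_M=\{(x,x):x\in M\}$. A semigroup/monoid is residually finite if distinct elements are separated by homomorphisms to finite semigroups/monoids. A group action on $X$ is primitive if it is transitive and the only $G$-invariant partitions of $X$ are the trivial ones. *)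

(* Defs.v *)
From HB Require Import structures.
From mathcomp Require Import all_boot all_fingroup.
From Stdlib Require List.
Set Implicit Arguments. Unset Strict Implicit. Unset Printing Implicit Defensive.

Definition is_group (G : Type) (mul : G -> G -> G) (one : G) (inv : G -> G) : Prop :=
  (forall a b c, mul a (mul b c) = mul (mul a b) c) /\
  (forall a, mul one a = a) /\ (forall a, mul a one = a) /\
  (forall a, mul (inv a) a = one) /\ (forall a, mul a (inv a) = one).

Definition residually_finite_group (G : Type) (mul : G -> G -> G) : Prop :=
  forall g h : G, g <> h ->
    exists (H : finGroupType) (f : G -> H),
      (forall a b, f (mul a b) = (f a * f b)%g) /\ f g <> f h.

Definition is_right_action (G X : Type) (mul : G -> G -> G) (one : G)
  (act : X -> G -> X) : Prop :=
  (forall x, act x one = x) /\ (forall x g h, act x (mul g h) = act (act x g) h).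

Definition transitive_action (G X : Type) (act : X -> G -> X) : Prop :=
  (exists x : X, True) /\ forall x y : X, exists g, act x g = y.

Definition equivalence_rel (X : Type) (E : X -> X -> Prop) : Prop :=
  (forall x, E x x) /\ (forall x y, E x y -> E y x) /\
  (forall x y z, E x y -> E y z -> E x z).

Definition primitive_action (G X : Type) (act : X -> G -> X) : Prop :=
  transitive_action act /\
  forall E : X -> X -> Prop, equivalence_rel E ->
    (forall x y g, E x y -> E (act x g) (act y g)) ->
    (forall x y, E x y -> x = y) \/ (forall x y, E x y).

Definition infinite_type (X : Type) : Prop :=
  ~ exists l : list X, forall x, List.In x l.

Inductive Mon (G X : Type) : Type :=
| Mone : Mon G X
| MG : G -> Mon G X
| MX : X -> Mon G X
| Mzero : Mon G X.
Arguments Mone {G X}. Arguments Mzero {G X}.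

Definition Mmul (G X : Type) (mul : G -> G -> G) (act : X -> G -> X)
  (a b : Mon G X) : Mon G X :=
  match a, b with
  | Mone, _ => b
  | _, Mone => a
  | MG g, MG h => MG X (mul g h)
  | MG _, MX _ => Mzero
  | MX x, MG g => MX G (act x g)
  | MX _, MX _ => Mzero
  | _, Mzero => Mzero
  | Mzero, _ => Mzero
  end.

Definition inI (G X : Type) (m : Mon G X) : Prop :=
  match m with MX _ | Mzero => True | _ => False end.

Definition is_ideal (S : Type) (op : S -> S -> S) (P : S -> Prop) : Prop :=
  (exists s, P s) /\ forall s a, P a -> P (op s a) /\ P (op a s).

Definition finite_semigroup (T : finType) (opT : T -> T -> T) : Prop :=
  forall a b c, opT a (opT b c) = opT (opT a b) c.

Definition finite_monoid (T : finType) (opT : T -> T -> T) (eT : T) : Prop :=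
  finite_semigroup opT /\ (forall a, opT eT a = a) /\ (forall a, opT a eT = a).

(* the subsemigroup P of S (closed under op) is residually finite as a
   semigroup: distinct elements of P separated by semigroup homomorphisms
   from P to finite semigroups (a map defined on S, homomorphic on P) *)
Definition rf_subsemigroup (S : Type) (op : S -> S -> S) (P : S -> Prop) : Prop :=
  forall s t, P s -> P t -> s <> t ->
    exists (T : finType) (opT : T -> T -> T) (f : S -> T),
      finite_semigroup opT /\
      (forall a b, P a -> P b -> f (op a b) = opT (f a) (f b)) /\ f s <> f t.

Definition rf_monoid (S : Type) (op : S -> S -> S) (e : S) : Prop :=
  forall s t, s <> t ->
    exists (T : finType) (opT : T -> T -> T) (eT : T) (f : S -> T),
      finite_monoid opT eT /\
      (forall a b, f (op a b) = opT (f a) (f b)) /\ f e = eT /\ f s <> f t.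

Definition rees_cong (S : Type) (P : S -> Prop) (a b : S) : Prop :=
  a = b \/ (P a /\ P b).

(* the quotient monoid S/R (R a congruence) is residually finite:
   monoid homomorphisms S/R -> T are exactly monoid homomorphisms S -> T
   constant on R-classes; distinct classes are separated. *)
Definition rf_monoid_quot (S : Type) (op : S -> S -> S) (e : S)
  (R : S -> S -> Prop) : Prop :=
  forall s t, ~ R s t ->
    exists (T : finType) (opT : T -> T -> T) (eT : T) (f : S -> T),
      finite_monoid opT eT /\
      (forall a b, f (op a b) = opT (f a) (f b)) /\ f e = eT /\
      (forall a b, R a b -> f a = f b) /\ f s <> f t.

(* Main.v *)
Require Import Defs.
From mathcomp Require Import all_boot all_fingroup.
From Stdlib Require Import ClassicalEpsilon.
From Stdlib Require List.
Set Implicit Arguments. Unset Strict Implicit.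

Section Aux.
Variables (G X : Type) (mul : G -> G -> G) (act : X -> G -> X).

Definition fq (H : finGroupType) (phi : G -> H) (m : Mon G X) : option (bool * H) :=
  match m with Mone => Some (true, 1%g) | MG g => Some (false, phi g) | _ => None end.

Definition opq (H : finGroupType) (a b : option (bool * H)) : option (bool * H) :=
  match a, b with Some (p, x), Some (q, y) => Some (p && q, (x * y)%g) | _, _ => None end.

Lemma opq_monoid (H : finGroupType) : finite_monoid (@opq H) (Some (true, 1%g)).
Proof.
split; [|split].
- move=> [[p x]|] [[q y]|] [[r z]|] //=; by rewrite andbA mulgA.
- by move=> [[p x]|] //=; rewrite mul1g.
- by move=> [[p x]|] //=; rewrite andbT mulg1.
Qed.

Lemma fq_hom (H : finGroupType) (phi : G -> H)
  (Hphi : forall a b, phi (mul a b) = (phi a * phi b)%g) :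
  forall a b, fq phi (Mmul mul act a b) = opq (fq phi a) (fq phi b).
Proof.
move=> [|g|x|] [|h|y|] //=; by rewrite ?mulg1 ?mul1g ?Hphi.
Qed.

Lemma fq_rees (H : finGroupType) (phi : G -> H) a b :
  rees_cong (@inI G X) a b -> fq phi a = fq phi b.
Proof.
move=> [->//|[]]; by case: a => //; case: b.
Qed.

Lemma In_seq (T : eqType) (t : T) (s : seq T) : t \in s -> List.In t s.
Proof.
elim: s => //= a s IH; rewrite in_cons => /orP [/eqP ->|/IH]; auto.
Qed.

End Aux.

Theorem mainTheorem12 (G X : Type) (mul : G -> G -> G) (one : G) (inv : G -> G)
  (act : X -> G -> X)
  (HG : is_group mul one inv)
  (Hact : is_right_action mul one act)
  (Hrf : residually_finite_group mul)
  (Hprim : primitive_action act)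
  (Hinf : infinite_type X) :
  is_ideal (Mmul mul act) (@inI G X) /\
  rf_subsemigroup (Mmul mul act) (@inI G X) /\
  rf_monoid_quot (Mmul mul act) Mone (rees_cong (@inI G X)) /\
  ~ rf_monoid (Mmul mul act) Mone.
Proof.
split; [|split; [|split]].
- split; first by exists Mzero.
  move=> s [|g|x|] //= _; case: s => //=.
- (* null semigroup *)
  have key : forall (x : X) (u : Mon G X), inI u -> u <> MX G x ->
    exists (T : finType) (opT : T -> T -> T) (f : Mon G X -> T),
      finite_semigroup opT /\
      (forall a b, inI a -> inI b -> f (Mmul mul act a b) = opT (f a) (f b)) /\
      f (MX G x) <> f u.
  { move=> x u Hu Hne.
    pose f := fun m : Mon G X => match m with
      | MX z => Some (if excluded_middle_informative (z = x) then true else false)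
      | _ => None end.
    exists (option bool), (fun _ _ => None), f; split; [by []|split].
    - by move=> [|g|a|] [|h|b|] //=.
    - rewrite /f; case: u Hu Hne => //= y _ Hne.
      destruct (excluded_middle_informative (x = x)) as [Hxx|N]; last by case: N.
      destruct (excluded_middle_informative (y = x)) as [Hy|Hy] => //; by subst. }
  move=> s t Hs Ht Hst; case: s Hs Hst => //.
  + move=> x _ Hst; apply: key => //; by move=> E; apply: Hst.
  + move=> _ Hst; case: t Ht Hst => // y _ Hst.
    have [T [opT [f [H1 [H2 H3]]]]] := key y Mzero I (fun E => match E with end).
    exists T, opT, f; split => //; split => //; by move=> E; apply: H3.
- move=> s t Hnr.
  have Hneq : s <> t by move=> E; apply: Hnr; left.
  have HnI : ~ (inI s /\ inI t) by move=> E; apply: Hnr; right.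
  pose H0 := {perm 'I_1}.
  have Hphi0 : forall a b : G, (fun _ : G => (1 : H0)%g) (mul a b)
      = ((fun _ : G => (1 : H0)%g) a * (fun _ : G => (1 : H0)%g) b)%g
    by move=> a b; rewrite mulg1.
  have triv : fq (X:=X) (fun _ : G => (1 : H0)%g) s <> fq (fun _ => 1%g) t ->
     exists (T : finType) (opT : T -> T -> T) (eT : T) (f : Mon G X -> T),
      finite_monoid opT eT /\
      (forall a b, f (Mmul mul act a b) = opT (f a) (f b)) /\ f Mone = eT /\
      (forall a b, rees_cong (@inI G X) a b -> f a = f b) /\ f s <> f t.
  { move=> Hd; exists _, (@opq H0), (Some (true, 1%g)), (fq (fun _ => 1%g)).
    split; first exact: opq_monoid.
    split; first exact: fq_hom.
    split => //; split => //; exact: fq_rees. }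
  clear Hnr; case: s t Hneq HnI triv => [|g|x|] [|h|y|] //= Hneq HnI triv;
    try (by apply: triv); try (by case: HnI).
  have Hgh : g <> h by move=> E; apply: Hneq; rewrite E.
  have [H [phi [Hphi Hd]]] := Hrf g h Hgh.
  exists _, (@opq H), (Some (true, 1%g)), (fq phi).
  split; first exact: opq_monoid.
  split; first exact: fq_hom.
  split => //; split; first exact: fq_rees.
  by move=> /= [E]; apply: Hd.
- move=> Hrfm.
  have [x0 [y0 Hxy]] : exists x y : X, x <> y.
  { apply: NNPP => Hn; apply Hinf.
    have [x _] : exists x : X, True.
    { apply: NNPP => Hn2; apply Hinf; exists nil => z; apply Hn2; by exists z. }
    exists (x :: nil) => z; left; apply: NNPP => Hzx; apply Hn; by exists x, z. }
  have Hne : MX G x0 <> MX G y0 by move=> [E]; apply: Hxy.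
  have [T [opT [eT [f [Hmon [Hhom [He Hsep]]]]]]] := Hrfm _ _ Hne.
  have [_ Hp] := Hprim.
  have HE : Defs.equivalence_rel (fun z w => f (MX G z) = f (MX G w)).
  { split; [by []|split; [by move=> ? ? E; rewrite E|by move=> ? ? ? E1 E2; rewrite E1 E2]]. }
  have HI : forall z w g, f (MX G z) = f (MX G w) ->
      f (MX G (act z g)) = f (MX G (act w g)).
  { move=> z w g E.
    have := Hhom (MX G z) (MG X g); have := Hhom (MX G w) (MG X g); simpl.
    by move=> -> ->; rewrite E. }
  have [Hinj|Hall] := Hp _ HE HI.
  + apply Hinf.
    pose pick := fun t : T => match excluded_middle_informative (exists z, f (MX G z) = t) with
      | left P => proj1_sig (constructive_indefinite_description _ P)
      | right _ => x0 end.
    exists (map pick (enum T)) => z.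
    have Hpk : pick (f (MX G z)) = z.
    { rewrite /pick; destruct (excluded_middle_informative (exists z0, f (MX G z0) = f (MX G z))) as [P|N]; last by exfalso; apply: N; exists z.
      case: constructive_indefinite_description => w /= Hw; exact: Hinj. }
    rewrite -Hpk; apply: List.in_map; apply: In_seq; by rewrite mem_enum.
  + by apply: Hsep; apply: Hall.
Qed.
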